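(* Fix $c\in\{1,\dots,K-1\}$ and suppose $$\bar p_c(\bm x,\bar Y)=\binom{K-1}{c}^{-1}\sum_{y\notin \bar Y}p(\bm x,y)\qquad(\bm x\in\mathcal X,\ \bar Y\in\overline{\mathcal Y}_c).$$ For $\gamma\in[0,1]$ define $$R^u_c(\bm g)=\mathbb E_{\bar p_c(\bm x,\bar Y)}\Big[(1-\gamma)\mathcal L(\bm g(\bm x))-\frac{K-1}{c}\sum_{y\in\bar Y}\ell(\bm g(\bm x),y)\Big]+\gamma\,\mathbb E_{p(\bm x)}\big[\mathcal L(\bm g(\bm x))\big].$$ Then for any loss $\ell$ and decision function $\bm g$ (with finite expectations), $R^u_c(\bm g)=R(\bm g)$.
   Context: Let $K\ge 2$, $\mathcal X\subseteq\mathbb R^d$ the feature space and $\mathcal Y=\{1,\dots,K\}$ the label space. Let $p(\bm x,y)$ be a joint density on $\mathcal X\times\mathcal Y$ with marginal density $p(\bm x)$. For $c\in\{1,\dots,K-1\}$, $\overline{\mathcal Y}_c$ denotes the collection of all $c$-element subsets of $\{1,\dots,K\}$, and $\bar p_c(\bm x,\bar Y)$ is a density on $\mathcal X\times\overline{\mathcal Y}_c$. A decision function is a map $\bm g:\mathcal X\to\mathbb R^K$, a loss is a function $\ell:\mathbb R^K\times\mathcal Y\to[0,\infty)$, the classification risk is $R(\bm g)=\mathbb E_{p(\bm x,y)}[\ell(\bm g(\bm x),y)]$, and the cumulative loss is $\mathcal L(\bm g(\bm x))=\sum_{y=1}^K\ell(\bm g(\bm x),y)$. *)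

(* Defs.v *)
From HB Require Import structures.
From mathcomp Require Import all_boot all_order all_algebra.
Set Implicit Arguments. Unset Strict Implicit. Unset Printing Implicit Defensive.
Import Order.TTheory GRing.Theory Num.Theory.
Local Open Scope ring_scope.

(* An abstract integral over the feature space X (standing in for the Lebesgue
   integral against dx on X ⊆ R^d): a linear functional on a class of
   "integrable" functions which is closed under linear combinations. *)
Definition linear_integral (X : Type) (R : realFieldType)
  (integrable : (X -> R) -> Prop) (I : (X -> R) -> R) : Prop :=
  [/\ (forall f h, integrable f -> integrable h ->
          integrable (fun x => f x + h x)),
      (forall (a : R) f, integrable f -> integrable (fun x => a * f x)),
      (forall f h, integrable f -> integrable h ->
          I (fun x => f x + h x) = I f + I h) &
      (forall (a : R) f, integrable f -> I (fun x => a * f x) = a * I f)].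

(* Labels are 'I_K = {0,...,K-1} (standing for {1,...,K}). *)

Definition marginal (X : Type) (R : realFieldType) (K : nat)
  (p : X -> 'I_K -> R) (x : X) : R := \sum_(y < K) p x y.

Definition cum_loss (R : realFieldType) (K : nat)
  (ell : 'rV[R]_K -> 'I_K -> R) (v : 'rV[R]_K) : R := \sum_(y < K) ell v y.

Definition E_joint (X : Type) (R : realFieldType) (K : nat)
  (I : (X -> R) -> R) (p : X -> 'I_K -> R) (f : X -> 'I_K -> R) : R :=
  I (fun x => \sum_(y < K) p x y * f x y).

Definition E_marg (X : Type) (R : realFieldType) (K : nat)
  (I : (X -> R) -> R) (p : X -> 'I_K -> R) (h : X -> R) : R :=
  I (fun x => marginal p x * h x).

Definition E_comp (X : Type) (R : realFieldType) (K c : nat)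
  (I : (X -> R) -> R) (pbar : X -> {set 'I_K} -> R)
  (f : X -> {set 'I_K} -> R) : R :=
  I (fun x => \sum_(Y : {set 'I_K} | #|Y| == c) pbar x Y * f x Y).

Definition risk (X : Type) (R : realFieldType) (K : nat)
  (I : (X -> R) -> R) (p : X -> 'I_K -> R)
  (ell : 'rV[R]_K -> 'I_K -> R) (g : X -> 'rV[R]_K) : R :=
  E_joint I p (fun x y => ell (g x) y).

Definition comp_term (X : Type) (R : realFieldType) (K c : nat) (gamma : R)
  (ell : 'rV[R]_K -> 'I_K -> R) (g : X -> 'rV[R]_K)
  (x : X) (Y : {set 'I_K}) : R :=
  (1 - gamma) * cum_loss ell (g x)
  - ((K.-1)%:R / c%:R) * \sum_(y in Y) ell (g x) y.

Definition unbiased_risk (X : Type) (R : realFieldType) (K c : nat)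
  (I : (X -> R) -> R) (p : X -> 'I_K -> R) (pbar : X -> {set 'I_K} -> R)
  (gamma : R) (ell : 'rV[R]_K -> 'I_K -> R) (g : X -> 'rV[R]_K) : R :=
  E_comp c I pbar (comp_term c gamma ell g)
  + gamma * E_marg I p (fun x => cum_loss ell (g x)).

(* Main.v *)
Require Import Defs.
From HB Require Import structures.
From mathcomp Require Import all_boot all_order all_algebra zify ring.
Import Order.TTheory GRing.Theory Num.Theory.
Local Open Scope ring_scope.

Lemma subC1 (T : finType) (Y : {set T}) a : (Y \subset ~: [set a]) = (a \notin Y).
Proof. by rewrite subsetC sub1set in_setC. Qed.
Lemma subC2 (T : finType) (Y : {set T}) a b :
  (Y \subset ~: [set a; b]) = (a \notin Y) && (b \notin Y).
Proof. by rewrite subsetC subUset !sub1set !in_setC. Qed.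

Lemma foo K c (y y' : 'I_K) (Y : {set 'I_K}) : 
  ((#|Y| == c) && ((y \notin Y) && (y' \in Y))) =
  (Y \in [set Y : {set 'I_K} | Y \subset ~: [set y] & #|Y| == c] :\:
          [set Y : {set 'I_K} | Y \subset ~: [set y; y'] & #|Y| == c]).
Proof.
rewrite in_setD.
rewrite (in_set (fun Y : {set 'I_K} => (Y \subset ~: [set y]) && (#|Y| == c))).
rewrite (in_set (fun Y : {set 'I_K} => (Y \subset ~: [set y; y']) && (#|Y| == c))).
rewrite subC1 subC2.
by case: (#|Y| == c); case: (y \in Y); case: (y' \in Y).
Qed.

Lemma cnt1 K c (y : 'I_K) :
  #|[pred Y : {set 'I_K} | (#|Y| == c) && (y \notin Y)]| = 'C(K.-1, c).
Proof.
have := cards_draws (~: [set y]) c.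
rewrite cardsC1 card_ord => <-.
apply: eq_card => Y.
rewrite inE (in_set (fun Y : {set 'I_K} => (Y \subset ~: [set y]) && (#|Y| == c))).
by rewrite subC1 andbC.
Qed.

Lemma cnt2 K c (y y' : 'I_K) : (1 <= c)%N -> y != y' ->
  #|[pred Y : {set 'I_K} | (#|Y| == c) && ((y \notin Y) && (y' \in Y))]|
   = 'C(K.-2, c.-1).
Proof.
move=> c1 ne.
rewrite (eq_card (B := [set Y : {set 'I_K} | Y \subset ~: [set y] & #|Y| == c] :\:
          [set Y : {set 'I_K} | Y \subset ~: [set y; y'] & #|Y| == c])); last first.
  by move=> Y; rewrite inE foo.
have sub : [set Y : {set 'I_K} | Y \subset ~: [set y; y'] & #|Y| == c] \subset
   [set Y : {set 'I_K} | Y \subset ~: [set y] & #|Y| == c].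
  apply/subsetP => Y.
  rewrite (in_set (fun Y : {set 'I_K} => (Y \subset ~: [set y]) && (#|Y| == c))).
  rewrite (in_set (fun Y : {set 'I_K} => (Y \subset ~: [set y; y']) && (#|Y| == c))).
  rewrite subC1 subC2.
  by case/andP => /andP [-> _] ->.
rewrite cardsD (setIidPr sub) !cards_draws cardsC1 card_ord.
have := cardsC [set y; y']; rewrite cards2 ne card_ord => hC.
have -> : #|~: [set y; y']| = K.-2 by lia.
have hK : (2 <= K)%N by lia.
clear sub hC ne.
case: K y y' hK => [|[|K]] // y y' _.
case: c c1 => [|c] // _.
rewrite /= binS. lia.
Qed.

Lemma sum_ind (R : realFieldType) (T : finType) (Q : pred T) (F : T -> R) :
  \sum_(i | Q i) F i = \sum_i (Q i)%:R * F i.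
Proof. rewrite big_mkcond; apply: eq_bigr => i _; by case: (Q i); rewrite ?mul1r ?mul0r. Qed.

Lemma sum_cnt (R : realFieldType) (T : finType) (Pr Q : pred T) :
  \sum_(i | Pr i) ((Q i)%:R : R) = #|[pred i | Pr i && Q i]|%:R.
Proof.
rewrite (eq_bigr (fun i => if Q i then (1:R) else 0)); last by move=> i _; case: (Q i).
rewrite -big_mkcondr sumr_const //.
Qed.

Lemma T1 (R : realFieldType) K c (P : 'I_K -> R) :
  \sum_(Y : {set 'I_K} | #|Y| == c) \sum_(y < K | y \notin Y) P y
  = 'C(K.-1, c)%:R * \sum_(y < K) P y.
Proof.
under eq_bigr => Y _ do rewrite sum_ind.
rewrite exchange_big mulr_sumr /=; apply: eq_bigr => y _.
rewrite -mulr_suml sum_cnt cnt1 mulrC //.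
Qed.

Lemma T2 (R : realFieldType) K c (P l : 'I_K -> R) : (1 <= c)%N ->
  \sum_(Y : {set 'I_K} | #|Y| == c)
     (\sum_(y < K | y \notin Y) P y) * (\sum_(y in Y) l y)
  = 'C(K.-2, c.-1)%:R * ((\sum_(y < K) P y) * (\sum_(y < K) l y) - \sum_(y < K) P y * l y).
Proof.
move=> c1.
under eq_bigr => Y _ do rewrite [X in X * _]sum_ind [X in _ * X]sum_ind big_distrlr /=.
rewrite exchange_big /= mulr_suml -sumrB mulr_sumr; apply: eq_bigr => y _.
rewrite exchange_big /= mulr_sumr.
rewrite [X in _ = _ * (X - _)](bigD1 y) //= [X in X = _](bigD1 y) //=.
have e : forall y', \sum_(Y : {set 'I_K} | #|Y| == c) ((y \notin Y)%:R * P y) * ((y' \in Y)%:R * l y')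
   = P y * l y' * #|[pred Y : {set 'I_K} | (#|Y| == c) && ((y \notin Y) && (y' \in Y))]|%:R.
  move=> y'; rewrite -sum_cnt mulr_sumr; apply: eq_bigr => Y _.
  by case: (y \in Y); case: (y' \in Y) => /=; ring.
rewrite e.
rewrite (_ : #|_| = 0%N); last first.
  apply: eq_card0 => Y; rewrite inE; by case: (y \in Y); rewrite ?andbF.
under eq_bigr => y' hy' do rewrite e cnt2 // 1?eq_sym //.
rewrite -mulr_suml -mulr_sumr; ring.
Qed.

Lemma key (R : realFieldType) K c (P l : 'I_K -> R) (pb : {set 'I_K} -> R) (gamma : R) :
  (1 <= c)%N -> (c <= K.-1)%N ->
  (forall Y : {set 'I_K}, #|Y| = c ->
     pb Y = ('C(K.-1, c)%:R)^-1 * \sum_(y < K | y \notin Y) P y) ->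
  \sum_(Y : {set 'I_K} | #|Y| == c)
     pb Y * ((1 - gamma) * (\sum_(y < K) l y) - ((K.-1)%:R / c%:R) * \sum_(y in Y) l y)
  + gamma * ((\sum_(y < K) P y) * \sum_(y < K) l y) = \sum_(y < K) P y * l y.
Proof.
move=> c1 cK hpb.
have NZ : ('C(K.-1, c)%:R : R) != 0 by rewrite pnatr_eq0 -lt0n bin_gt0.
have cZ : (c%:R : R) != 0 by rewrite pnatr_eq0 -lt0n.
have aD : (K.-1)%:R / c%:R * 'C(K.-2, c.-1)%:R = ('C(K.-1, c)%:R : R).
  have := mul_bin_diag K.-1 c.-1; rewrite prednK //.
  move/(congr1 (fun n => (n%:R : R))); rewrite !natrM => h.
  by rewrite mulrAC h mulrC mulKf.
have -> : \sum_(Y : {set 'I_K} | #|Y| == c)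
     pb Y * ((1 - gamma) * (\sum_(y < K) l y) - ((K.-1)%:R / c%:R) * \sum_(y in Y) l y)
   = \sum_(Y : {set 'I_K} | #|Y| == c) (('C(K.-1, c)%:R)^-1 * ((\sum_(y < K | y \notin Y) P y)
   * ((1 - gamma) * (\sum_(y < K) l y)) - (K.-1)%:R / c%:R *
   ((\sum_(y < K | y \notin Y) P y) * \sum_(y in Y) l y))).
  by apply: eq_bigr => Y /eqP hY; rewrite hpb //; ring.
rewrite -mulr_sumr sumrB -!mulr_suml -mulr_sumr T1 T2 //.
rewrite -aD in NZ *.
move: NZ; set a := (K.-1)%:R / c%:R; set D := ('C(K.-2, c.-1)%:R : R) => NZ.
field.
by move: NZ; rewrite mulf_eq0 negb_or andbC.
Qed.

From Stdlib Require Import FunctionalExtensionality.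

Theorem lemma2 (R : realFieldType) (X : Type) (K c : nat)
  (integrable : (X -> R) -> Prop) (I : (X -> R) -> R)
  (p : X -> 'I_K -> R) (pbar : X -> {set 'I_K} -> R)
  (gamma : R) (ell : 'rV[R]_K -> 'I_K -> R) (g : X -> 'rV[R]_K) :
  (2 <= K)%N -> (1 <= c)%N -> (c <= K.-1)%N ->
  linear_integral integrable I ->
  (* p is a joint density *)
  (forall x y, 0 <= p x y) ->
  integrable (marginal p) -> I (marginal p) = 1 ->
  (* pbar_c is given by the complementary-label generation formula *)
  (forall x (Y : {set 'I_K}), #|Y| = c ->
     pbar x Y = ('C(K.-1, c)%:R)^-1 * \sum_(y < K | y \notin Y) p x y) ->
  0 <= gamma <= 1 ->
  (* l is a loss: nonnegative *)
  (forall v y, 0 <= ell v y) ->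
  (* finite expectations *)
  integrable (fun x => \sum_(y < K) p x y * ell (g x) y) ->
  integrable (fun x => \sum_(Y : {set 'I_K} | #|Y| == c)
                         pbar x Y * comp_term c gamma ell g x Y) ->
  integrable (fun x => marginal p x * cum_loss ell (g x)) ->
  unbiased_risk c I p pbar gamma ell g = risk I p ell g.
Proof.
move=> _ c1 cK [_ intZ ID IZ] _ _ _ hpb _ _ _ iS iM.
rewrite /unbiased_risk /E_comp /E_marg /risk /E_joint.
rewrite -IZ // -ID //; last exact: intZ.
congr (I _); apply: functional_extensionality => x.
rewrite /comp_term /cum_loss /marginal.
exact: (@key R K c (p x) (fun y => ell (g x) y) (pbar x) gamma c1 cK (hpb x)).
Qed.
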